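(* Let $k \in \mathbb{N}$ and let $\xi, \varepsilon, \varepsilon', d', d$ be positive constants such that $0 < \xi \ll 1/k \ll \varepsilon \ll \varepsilon' \ll d' \ll d \ll 1$. Suppose $G$ is a graph on $n$ vertices, $A_1, B_1, A_2, B_2, \dots, A_k, B_k$ is a partition of $V(G)$ such that $|A_i|, |B_i| \geq n/3k$ for all $1 \leq i \leq k$, and $R$ is an $(\varepsilon,d)$-reduced graph of $G$ on $A_1, B_1, \dots, A_k, B_k$. Let $(a_i)_{i=1}^k$ and $(b_i)_{i=1}^k$ be integers. Suppose that: (i) $R$ contains the Hamilton cycle $A_1 B_1 A_2 B_2 \dots A_k B_k A_1$; (ii) $R$ contains an edge $A_{i_1}A_{j_1}$ for some $i_1 \neq j_1$; (iii) $R$ contains an edge $B_{i_2}B_{j_2}$ for some $i_2 \neq j_2$; (iv) $(A_i, B_i)_G$ is $(\varepsilon,d)$-super-regular for all $1 \leq i \leq k$; (v) $|a_i|, |b_i| < \xi n$ for each $1 \leq i \leq k$; (vi) $\sum_{i=1}^k a_i + \sum_{i=1}^k b_i = 0$; (vii) $|\sum_{i=1}^k a_i| = |\sum_{i=1}^k b_i| \leq \xi n$. Then there exists a partition $A'_1, B'_1, \dots, A'_k, B'_k$ of $V(G)$ such that $|A'_i| = |A_i| + a_i$ and $|B'_i| = |B_i| + b_i$ for each $1 \leq i \leq k$, $R$ is an $(\varepsilon', d')$-reduced graph of $G$ on $A'_1, B'_1, \dots, A'_k, B'_k$, and $(A'_i, B'_i)_G$ is $(\varepsilon', d')$-super-regular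 for each $1 \leq i \leq k$.
   Context: The hierarchy $0 < \xi \ll 1/k \ll \varepsilon \ll \varepsilon' \ll d' \ll d \ll 1$ means the constants are chosen from right to left, each sufficiently small relative to the previously chosen ones. For disjoint $A, B \subseteq V(G)$, $(A,B)_G$ is the bipartite subgraph of $G$ with classes $A, B$ and all edges of $G$ between them; its density is $d(A,B) = e(A,B)/(|A||B|)$. $(A,B)_G$ is $(\varepsilon,d)$-regular if $d(A,B) \geq d$ and $|d(A,B) - d(X,Y)| < \varepsilon$ for all $X \subseteq A$, $Y \subseteq B$ with $|X| \geq \varepsilon|A|$, $|Y| \geq \varepsilon|B|$; it is $(\varepsilon,d)$-super-regular if moreover every vertex of $A$ has at least $d|B|$ neighbours in $B$ and every vertex of $B$ has at least $d|A|$ neighbours in $A$. Given a partition $V_1, \dots, V_m$ of $V(G)$, a graph $R$ is an $(\varepsilon,d)$-reduced graph of $G$ on $V_1,\dots,V_m$ if $V(R) = \{V_1,\dots,V_m\}$ and $(V_i,V_j)_G$ is $(\varepsilon,d)$-regular whenever $V_iV_j \in E(R)$. If $V'_1,\dots,V'_m$ is another partition of $V(G)$, we say $R$ is an $(\varepsilon',d')$-reduced graph of $G$ on $V'_1,\dots,V'_m$ if $(V'_i,V'_j)_G$ is $(\varepsilon',d')$-regular whenever $V_iV_j \in E(R)$ (with $A'_i$ corresponding to $A_i$ and $B'_i$ to $B_i$). *)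

(* Defs.v *)
From mathcomp Require Import all_boot all_order all_algebra.
From mathcomp Require Import reals.
Set Implicit Arguments. Unset Strict Implicit. Unset Printing Implicit Defensive.
Import Order.TTheory GRing.Theory Num.Theory.
Local Open Scope ring_scope.

Section Regularity.
Variables (R : realType) (T : finType) (G : rel T).

Definition edges_between (X Y : {set T}) : nat :=
  #|[set xy in setX X Y | G xy.1 xy.2]|.

Definition density (X Y : {set T}) : R :=
  (edges_between X Y)%:R / (#|X| * #|Y|)%:R.

Definition regular_pair (eps d : R) (A B : {set T}) : Prop :=
  d <= density A B /\
  forall X Y : {set T}, X \subset A -> Y \subset B ->
    eps * #|A|%:R <= #|X|%:R -> eps * #|B|%:R <= #|Y|%:R ->
    `|density A B - density X Y| < eps.

Definition super_regular_pair (eps d : R) (A B : {set T}) : Prop :=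
  regular_pair eps d A B /\
  (forall a, a \in A -> d * #|B|%:R <= #|[set b in B | G a b]|%:R) /\
  (forall b, b \in B -> d * #|A|%:R <= #|[set a in A | G b a]|%:R).

Definition is_partition (I : finType) (P : I -> {set T}) : Prop :=
  (forall i j, i != j -> [disjoint P i & P j]) /\
  (forall x : T, exists i, x \in P i) /\
  (forall i, P i != set0).

Definition reduced_graph (I : finType) (Rg : rel I) (eps d : R)
  (P : I -> {set T}) : Prop :=
  forall i j, Rg i j -> regular_pair eps d (P i) (P j).
End Regularity.

(* Clusters indexed by 'I_k * bool: (i, false) is A_i and (i, true) is B_i. *)
Definition Acl {k : nat} (i : 'I_k) : 'I_k * bool := (i, false).
Definition Bcl {k : nat} (i : 'I_k) : 'I_k * bool := (i, true).

Definition succ_idx {k : nat} (i : 'I_k) : 'I_k :=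
  match k return 'I_k -> 'I_k with
  | 0 => fun i => i
  | k'.+1 => fun i => ordS i
  end i.

Definition contains_ham_cycle {k : nat} (Rg : rel ('I_k * bool)) : Prop :=
  forall i : 'I_k, Rg (Acl i) (Bcl i) /\ Rg (Bcl i) (Acl (succ_idx i)).

(* Main.v *)
Require Import Defs.
From mathcomp Require Import all_boot all_order all_algebra.
From mathcomp Require Import reals.
From mathcomp Require Import ring lra zify.
Set Implicit Arguments. Unset Strict Implicit. Unset Printing Implicit Defensive.
Import Order.TTheory GRing.Theory Num.Theory.
Local Open Scope ring_scope.

Lemma dens_real (R : realType) (e1 e2 n1 n2 : R) :
  0 <= e1 -> e1 <= n1 -> 0 < n2 -> e1 <= e2 -> e2 + n1 <= e1 + n2 ->
  `|e2 / n2 - e1 / n1| <= (n2 - n1) / n2.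
Proof.
move=> e10 e1n1 n2p e12 e21.
have n10 : 0 <= n1 by apply: le_trans e1n1.
have [n1z|n1p] := eqVneq n1 0.
  rewrite n1z in e1n1 e21 *.
  have e1z : e1 = 0 by apply/eqP; rewrite eq_le e10 e1n1.
  rewrite e1z in e21 *.
  rewrite invr0 mulr0 subr0 subr0 ger0_norm; last by apply: divr_ge0; lra.
  by rewrite ler_pM2r ?invr_gt0 //; lra.
have n1q : 0 < n1 by rewrite lt_def n1p.
rewrite ler_norml; apply/andP; split.
- rewrite -subr_ge0.
  have -> : e2 / n2 - e1 / n1 - - ((n2 - n1) / n2) = ((n2 - n1) * n1 + e2 * n1 - e1 * n2) / (n1 * n2).
    by field; apply/andP; split; apply/lt0r_neq0.
  apply: divr_ge0; last by apply: mulr_ge0; lra.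
  nra.
- rewrite -subr_ge0.
  have -> : (n2 - n1) / n2 - (e2 / n2 - e1 / n1) = ((n2 - n1) * n1 - e2 * n1 + e1 * n2) / (n1 * n2).
    by field; apply/andP; split; apply/lt0r_neq0.
  apply: divr_ge0; last by apply: mulr_ge0; lra.
  nra.
Qed.

Section Dens.
Variables (R : realType) (T : finType) (G : rel T).

Definition E_ (X Y : {set T}) := [set xy in setX X Y | G xy.1 xy.2].

Lemma edges_le (X Y : {set T}) : (edges_between G X Y <= #|X| * #|Y|)%N.
Proof.
rewrite /edges_between -cardsX; apply: subset_leq_card.
by apply/subsetP=> xy; rewrite inE => /andP[].
Qed.

Lemma edges_sub (X1 X2 Y1 Y2 : {set T}) : X1 \subset X2 -> Y1 \subset Y2 ->
  (edges_between G X1 Y1 <= edges_between G X2 Y2)%N /\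
  (edges_between G X2 Y2 + #|X1| * #|Y1| <= edges_between G X1 Y1 + #|X2| * #|Y2|)%N.
Proof.
move=> sX sY.
have sS : setX X1 Y1 \subset setX X2 Y2.
  by apply/subsetP=> xy; rewrite !inE => /andP[/(subsetP sX) -> /(subsetP sY) ->].
have sE : [set xy in setX X1 Y1 | G xy.1 xy.2] \subset [set xy in setX X2 Y2 | G xy.1 xy.2].
  by apply/subsetP=> xy; rewrite !inE => /andP[/andP[a b] c]; rewrite (subsetP sX _ a) (subsetP sY _ b) c.
split; first exact: subset_leq_card.
rewrite /edges_between -!cardsX.
set E1 := [set xy in _ | _] in sE *; set E2 := [set xy in _ | _] in sE *.
rewrite -(cardsID E1 E2) -(cardsID (setX X1 Y1) (setX X2 Y2)).
rewrite (setIidPr sE) (setIidPr sS).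
have : (#|E2 :\: E1| <= #|setX X2 Y2 :\: setX X1 Y1|)%N.
  apply: subset_leq_card; apply/subsetP=> xy; rewrite !inE => /andP[H1 /andP[H2 H3]].
  rewrite H2 andbT; apply: contra H1 => H4; by rewrite H4 H3.
lia.
Qed.

Lemma dens_close (X1 X2 Y1 Y2 : {set T}) (M : nat) :
  X1 \subset X2 -> Y1 \subset Y2 -> (#|X2| <= #|X1| + M)%N -> (#|Y2| <= #|Y1| + M)%N ->
  (0 < #|X2|)%N -> (0 < #|Y2|)%N ->
  `|density R G X2 Y2 - density R G X1 Y1| <= M%:R / #|X2|%:R + M%:R / #|Y2|%:R.
Proof.
move=> sX sY hX hY pX pY.
have [h1 h2] := edges_sub sX sY.
have h3 := edges_le X1 Y1.
have sx : (#|X1| <= #|X2|)%N by exact: subset_leq_card.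
have sy : (#|Y1| <= #|Y2|)%N by exact: subset_leq_card.
rewrite /density.
apply: le_trans (dens_real _ _ _ _ _) _.
- exact: ler0n.
- by rewrite ler_nat.
- by rewrite ltr0n muln_gt0 pX pY.
- by rewrite ler_nat.
- by rewrite -!natrD ler_nat.
set x1 := #|X1|%:R : R; set x2 := #|X2|%:R : R; set y1 := #|Y1|%:R : R; set y2 := #|Y2|%:R : R.
set m := M%:R : R.
have x2p : 0 < x2 by rewrite ltr0n.
have y2p : 0 < y2 by rewrite ltr0n.
have y1p : 0 <= y1 by rewrite ler0n.
have hx : x2 <= x1 + m by rewrite -natrD ler_nat.
have hy : y2 <= y1 + m by rewrite -natrD ler_nat.
have hy' : y1 <= y2 by rewrite ler_nat.
rewrite !natrM -/x1 -/x2 -/y1 -/y2.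
have -> : m / x2 + m / y2 = (m * y2 + m * x2) / (x2 * y2).
  by field; apply/andP; split; apply/lt0r_neq0.
rewrite ler_pM2r ?invr_gt0 ?mulr_gt0 //.
nra.
Qed.
End Dens.


Lemma ar1 (R : realType) (m x a' mu e' : R) : 0 < e' -> 0 < x -> 0 <= mu ->
  e' * a' <= x -> m <= 2 * mu * a' -> m / x <= 2 * (mu / e').
Proof.
move=> e'p xp mu0 hx hm.
rewrite ler_pdivrMr //.
have mue0 : 0 <= 2 * (mu / e') by apply: mulr_ge0; [lra | apply: divr_ge0 => //; apply: ltW].
have := ler_wpM2l mue0 hx.
have -> : 2 * (mu / e') * (e' * a') = 2 * mu * a' by field; apply: lt0r_neq0.
lra.
Qed.

Lemma ar2 (R : realType) (eps eps' mu a a0 a' m x x0 : R) :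
  0 < eps' -> eps' <= 1 -> 0 < eps -> eps <= eps' / 2 -> 0 <= mu -> mu <= eps' / 20 ->
  0 < a -> 0 <= m -> a <= a0 + m -> a0 <= a' -> m <= mu * a ->
  eps' * a' <= x -> x <= x0 + m -> eps * a <= x0.
Proof.
move=> e'p e'1 ep ee' mu0 mue ap m0 h1 h2 h3 h4 h5.
have e'0 : 0 <= eps' by apply: ltW.
have t1 : a - m <= a' by lra.
have := ler_wpM2l e'0 t1.
have := ler_wpM2r m0 e'1.
have := ler_wpM2r (ltW ap) mue.
have := ler_wpM2r (ltW ap) ee'.
rewrite mulrBr; nra.
Qed.

Section Perturb.
Variables (R : realType) (T : finType) (G : rel T).

Lemma div_le_c (m a c : R) : 0 < a -> m <= c * a -> m / a <= c.
Proof. by move=> ap h; rewrite ler_pdivrMr. Qed.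

Lemma card_inter_bound (A A' : {set T}) (M : nat) :
  (#|A :\: A'| <= M)%N -> (#|A' :\: A| <= M)%N ->
  [/\ (#|A| <= #|A :&: A'| + M)%N, (#|A'| <= #|A :&: A'| + M)%N,
      (#|A :&: A'| <= #|A'|)%N & (#|A :&: A'| <= #|A|)%N].
Proof.
move=> h1 h2.
have e1 := cardsID A' A.
have e2 := cardsID A A'; rewrite (setIC A' A) in e2.
split; lia.
Qed.

Lemma perturb (eps d eps' d' mu : R) (A B A' B' : {set T}) (M : nat) :
  0 < eps' -> eps' <= 1 -> 0 < eps -> eps <= eps' / 2 -> 0 <= mu ->
  mu <= eps' ^+ 2 / 20 -> 6 * mu <= d - d' ->
  (0 < #|A|)%N -> (0 < #|B|)%N -> M%:R <= mu * #|A|%:R -> M%:R <= mu * #|B|%:R ->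
  (#|A :\: A'| <= M)%N -> (#|A' :\: A| <= M)%N ->
  (#|B :\: B'| <= M)%N -> (#|B' :\: B| <= M)%N ->
  regular_pair G eps d A B -> regular_pair G eps' d' A' B'.
Proof.
move=> e'p e'1 ep ee' mu0 mue' mud Ap Bp MA MB hA1 hA2 hB1 hB2 [dAB reg].
have [iA1 iA2 iA3 iA4] := card_inter_bound hA1 hA2.
have [iB1 iB2 iB3 iB4] := card_inter_bound hB1 hB2.
set A0 := A :&: A' in iA1 iA2 iA3 iA4.
set B0 := B :&: B' in iB1 iB2 iB3 iB4.
set a := #|A|%:R : R in MA; set b := #|B|%:R : R in MB.
set m := M%:R : R in MA MB.
have ap : 0 < a by rewrite ltr0n.
have bp : 0 < b by rewrite ltr0n.
have m0 : 0 <= m by rewrite ler0n.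
have mu1 : mu <= 1/20.
  have : eps' ^+ 2 <= 1 by rewrite expr2; apply: mulr_ile1 => //; apply: ltW.
  lra.
have ra1 : a <= #|A0|%:R + m by rewrite -natrD ler_nat.
have ra2 : #|A'|%:R <= #|A0|%:R + m by rewrite -natrD ler_nat.
have ra3 : #|A0|%:R <= #|A'|%:R :> R by rewrite ler_nat.
have rb1 : b <= #|B0|%:R + m by rewrite -natrD ler_nat.
have rb3 : #|B0|%:R <= #|B'|%:R :> R by rewrite ler_nat.
have mua : mu * a <= 1 / 20 * a by apply: ler_wpM2r => //; apply: ltW.
have mub : mu * b <= 1 / 20 * b by apply: ler_wpM2r => //; apply: ltW.
have a0p : 0 < #|A0|%:R :> R by lra.
have b0p : 0 < #|B0|%:R :> R by lra.
have a'p : 0 < #|A'|%:R :> R by apply: lt_le_trans ra3.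
have b'p : 0 < #|B'|%:R :> R by apply: lt_le_trans rb3.
have A'p : (0 < #|A'|)%N by rewrite -(ltr0n R).
have B'p : (0 < #|B'|)%N by rewrite -(ltr0n R).
have aa' : a <= 2 * #|A'|%:R by lra.
have bb' : b <= 2 * #|B'|%:R by lra.
have mA' : m <= 2 * mu * #|A'|%:R.
  have := ler_wpM2l mu0 aa'; rewrite mulrA (mulrC mu 2); lra.
have mB' : m <= 2 * mu * #|B'|%:R.
  have := ler_wpM2l mu0 bb'; rewrite mulrA (mulrC mu 2); lra.
have d1 : `|density R G A B - density R G A0 B0| <= 2 * mu.
  apply: le_trans (dens_close _ _ _ _ _ _ _ _) _.
  - exact: subsetIl. - exact: subsetIl. - exact: iA1. - exact: iB1.
  - exact: Ap. - exact: Bp.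
  rewrite -/a -/b -/m.
  have := div_le_c ap MA; have := div_le_c bp MB; lra.
have d2 : `|density R G A' B' - density R G A0 B0| <= 4 * mu.
  apply: le_trans (dens_close _ _ _ _ _ _ _ _) _.
  - exact: subsetIr. - exact: subsetIr. - exact: iA2. - exact: iB2.
  - exact: A'p. - exact: B'p.
  rewrite -/m.
  have := div_le_c a'p mA'; have := div_le_c b'p mB'; lra.
have d3 : `|density R G A' B' - density R G A B| <= 6 * mu.
  have := ler_distD (density R G A0 B0) (density R G A' B') (density R G A B).
  rewrite (distrC (density R G A0 B0)). lra.
have mue1 : mu <= eps' / 20.
  have : eps' ^+ 2 <= eps' by rewrite expr2 ler_piMr //; apply: ltW.
  lra.
have mue2 : mu / eps' <= eps' / 20.
  apply: div_le_c => //; move: mue'; rewrite expr2; lra.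
split.
  move: d3; rewrite ler_norml => /andP[h _]; lra.
move=> X Y sXA' sYB' hX hY.
have hXA : (#|X :\: A| <= M)%N.
  apply: leq_trans hA2; apply: subset_leq_card; apply: setSD sXA'.
have hYB : (#|Y :\: B| <= M)%N.
  apply: leq_trans hB2; apply: subset_leq_card; apply: setSD sYB'.
have iX : (#|X| <= #|X :&: A| + M)%N by have := cardsID A X; clear -hXA; lia.
have iY : (#|Y| <= #|Y :&: B| + M)%N by have := cardsID B Y; clear -hYB; lia.
have rX : #|X|%:R <= #|X :&: A|%:R + m :> R by rewrite -natrD ler_nat.
have rY : #|Y|%:R <= #|Y :&: B|%:R + m :> R by rewrite -natrD ler_nat.
have xp : 0 < #|X|%:R :> R by apply: lt_le_trans hX; apply: mulr_gt0.
have yp : 0 < #|Y|%:R :> R by apply: lt_le_trans hY; apply: mulr_gt0.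
have Xp : (0 < #|X|)%N by rewrite -(ltr0n R).
have Yp : (0 < #|Y|)%N by rewrite -(ltr0n R).
have d4 : `|density R G X Y - density R G (X :&: A) (Y :&: B)| <= 4 * (mu / eps').
  apply: le_trans (dens_close _ _ _ _ _ _ _ _) _.
  - exact: subsetIl. - exact: subsetIl. - exact: iX. - exact: iY.
  - exact: Xp. - exact: Yp.
  rewrite -/m.
  have h1 := ar1 e'p xp mu0 hX mA'.
  have h2 := ar1 e'p yp mu0 hY mB'.
  clear -h1 h2; lra.
have hx0 : eps * a <= #|X :&: A|%:R.
  exact: (ar2 e'p e'1 ep ee' mu0 mue1 ap m0 ra1 ra3 MA hX rX).
have hy0 : eps * b <= #|Y :&: B|%:R.
  exact: (ar2 e'p e'1 ep ee' mu0 mue1 bp m0 rb1 rb3 MB hY rY).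
have d5 := reg _ _ (subsetIr X A) (subsetIr Y B) hx0 hy0.
have t1 := ler_distD (density R G A B) (density R G A' B') (density R G (X :&: A) (Y :&: B)).
have t2 := ler_distD (density R G (X :&: A) (Y :&: B)) (density R G A' B') (density R G X Y).
rewrite (distrC (density R G (X :&: A) (Y :&: B)) (density R G X Y)) in t2.
clear -t1 t2 d3 d4 d5 mue1 mue2 ee'.
lra.
Qed.
End Perturb.
Section Good.
Variables (R : realType) (T : finType) (G : rel T).

Definition deg (x : T) (Y : {set T}) := #|[set y in Y | G x y]|.

Lemma edges_sum (S Y : {set T}) :
  edges_between G S Y = (\sum_(x in S) deg x Y)%N.
Proof.
rewrite /edges_between /deg -sum1_card.
symmetry.
transitivity (\sum_(x in S) \sum_(y | (y \in Y) && G x y) 1)%N.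
  apply: eq_bigr => x _; rewrite -sum1_card; apply: eq_bigl => y; by rewrite !inE.
rewrite (pair_big_dep (fun x => x \in S) (fun x y => (y \in Y) && G x y) (fun _ _ => 1%N)) /=.
apply: eq_bigl => -[x y] /=; rewrite !inE /=; by rewrite andbA.
Qed.
End Good.
Section Good2.
Variables (R : realType) (T : finType) (G : rel T).

Lemma bad_few (eps d : R) (X Y : {set T}) : 0 < eps -> eps <= 1 -> eps <= d / 2 ->
  (0 < #|X|)%N -> regular_pair G eps d X Y ->
  #|[set x in X | (deg G x Y)%:R < d / 2 * #|Y|%:R :> R]|%:R < eps * #|X|%:R.
Proof.
move=> ep e1 ed Xp [dXY reg].
set S := [set x in X | _].
rewrite ltNge; apply/negP => hS.
have Ssub : S \subset X by apply/subsetP => x; rewrite inE => /andP[].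
have Sp : 0 < #|S|%:R :> R.
  apply: lt_le_trans hS; apply: mulr_gt0 => //; by rewrite ltr0n.
have [x xS] : exists x, x \in S.
  have : (0 < #|S|)%N by rewrite -(ltr0n R).
  by rewrite card_gt0 => /set0Pn.
have Yp : (0 < #|Y|)%N.
  rewrite lt0n; apply/negP => /eqP Y0.
  move: xS; rewrite inE Y0 => /andP[_ h]; have := ler0n R (deg G x Y); move: h; rewrite mulr0n mulr0; lra.
have hY : eps * #|Y|%:R <= #|Y|%:R.
  have := ler_wpM2r (ler0n R #|Y|) e1; by rewrite mul1r.
have h := reg S Y Ssub (subxx Y) hS hY.
have dS : density R G S Y < d / 2.
  rewrite /density edges_sum natr_sum natrM.
  rewrite ltr_pdivrMr; last by apply: mulr_gt0 => //; rewrite ltr0n.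
  apply: (@lt_le_trans _ _ (\sum_(x in S) (d / 2 * #|Y|%:R))).
    apply: ltr_sum.
      by apply/hasP; exists x => //; rewrite mem_index_enum.
    by move=> z; rewrite inE => /andP[].
  rewrite sumr_const -mulr_natl; lra.
move: h; rewrite ltr_norml => /andP[_ h2].
lra.
Qed.
End Good2.
Section Comb.
Variables (R : realType) (T : finType) (G : rel T) (k : nat).
Variables (P : 'I_k * bool -> {set T}) (d : R).
Variable f0 : T -> 'I_k * bool.
Hypothesis Pf0 : forall x p, (x \in P p) = (f0 x == p).

Definition partner (p : 'I_k * bool) : 'I_k * bool := (p.1, ~~ p.2).
Definition good (x : T) (q : 'I_k * bool) : bool :=
  d / 2 * #|P (partner q)|%:R <= (deg G x (P (partner q)))%:R.
Definition Inv (f : T -> 'I_k * bool) := forall x, good x (f x).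
Definition moved (f : T -> 'I_k * bool) := #|[set x | f x != f0 x]|.
Definition sz (f : T -> 'I_k * bool) r := #|[set x | f x == r]|.

Lemma cardU_le (A B : {set T}) : (#|A :|: B| <= #|A| + #|B|)%N.
Proof. have := cardsUI A B; lia. Qed.

Lemma step (f : T -> 'I_k * bool) p q :
  Inv f -> (#|[set x in P p | ~~ good x q]| + moved f < #|P p|)%N ->
  exists f', [/\ Inv f', (moved f' <= (moved f).+1)%N &
    forall r, (sz f' r : int) = (sz f r : int) - (r == p)%:R + (r == q)%:R].
Proof.
move=> If hav.
set Bad := [set x in P p | ~~ good x q] in hav.
set Mv := [set x | f x != f0 x].
set Gd := [set x in P p | good x q && (f x == f0 x)].
have sub : P p \subset (Bad :|: Mv) :|: Gd.
  apply/subsetP => x xP; rewrite !inE xP /=.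
  by case: (good x q); case: (f x == f0 x).
have : Gd != set0.
  apply/negP => /eqP G0; move: (subset_leq_card sub); rewrite G0 setU0.
  have := cardU_le Bad Mv; rewrite /moved -/Mv in hav; lia.
case/set0Pn => x; rewrite inE => /andP[xP /andP[gx /eqP fx]].
have fxp : f x = p by apply/eqP; rewrite fx -Pf0.
exists (fun y => if y == x then q else f y); split.
- by move=> y; case: (y =P x) => [->|_].
- rewrite /moved.
  apply: (@leq_trans #|x |: Mv|); last by rewrite cardsU1; case: (x \in Mv).
  apply: subset_leq_card; apply/subsetP => y; rewrite !inE.
  move=> h; case: (y =P x) h => [->|_] //= ->; rewrite orbT.
- move=> r; rewrite /sz.
  rewrite (cardsD1 x [set y | (if y == x then q else f y) == r]) (cardsD1 x [set y | f y == r]).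
  have -> : [set y | (if y == x then q else f y) == r] :\ x = [set y | f y == r] :\ x.
    by apply/setP => y; rewrite !inE; case: eqP.
  rewrite !inE eqxx fxp.
  rewrite (eq_sym r p) (eq_sym r q) !PoszD.
  case: (p == r); case: (q == r) => /=; rewrite ?addr0 ?subr0; ring.
Qed.
End Comb.
Section Loop.
Variables (R : realType) (T : finType) (G : rel T) (k : nat).
Variables (P : 'I_k * bool -> {set T}) (d : R).
Variable f0 : T -> 'I_k * bool.
Hypothesis Pf0 : forall x p, (x \in P p) = (f0 x == p).
Variable Rg : rel ('I_k * bool).
Variable Mb : nat.
Hypothesis Hav : forall p q, Rg p (partner q) ->
  (#|[set x in P p | ~~ good G P d x q]| + Mb <= #|P p|)%N.

Inductive walk : nat -> 'I_k * bool -> 'I_k * bool -> Prop :=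
| walk0 p : walk 0 p p
| walkS n p q r : Rg p (partner q) -> walk n q r -> walk n.+1 p r.

Lemma path_move n p r : walk n p r -> forall f, Inv G P d f ->
  (moved f0 f + n <= Mb)%N ->
  exists f', [/\ Inv G P d f', (moved f0 f' <= moved f0 f + n)%N &
    forall s, (sz f' s : int) = (sz f s : int) - (s == p)%:R + (s == r)%:R].
Proof.
elim => {n p r} [p|n p q r Rpq w IH] f If hM.
  exists f; split => //; first by rewrite addn0.
  by move=> s; rewrite subrK.
have hav : (#|[set x in P p | ~~ good G P d x q]| + moved f0 f < #|P p|)%N.
  have := Hav Rpq; lia.
have [f1 [If1 hm1 hs1]] := step Pf0 If hav.
have [f' [If' hm' hs']] := IH f1 If1 ltac:(lia).
exists f'; split => //; first by lia.
move=> s; rewrite hs' hs1; ring.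
Qed.

Variable t : 'I_k * bool -> int.
Variable L : nat.
Hypothesis Hwalk : forall p q, exists2 n, (n <= L)%N & walk n p q.
Hypothesis Htot : \sum_r t r = #|T|%:Z.

Definition Dist (f : T -> 'I_k * bool) := \sum_r `|(sz f r : int) - t r|.

Lemma sz_sum (f : T -> 'I_k * bool) : (\sum_r sz f r)%N = #|T|.
Proof.
rewrite /sz.
transitivity (\sum_r \sum_x (f x == r) : nat)%N.
  by apply: eq_bigr => r _; rewrite -sum1_card big_mkcond /=; apply: eq_bigr => x _; rewrite inE; case: (f x == r).
rewrite exchange_big /= -sum1_card.
apply: eq_bigr => x _.
rewrite (bigD1 (f x)) //= eqxx big1 // => r; rewrite eq_sym => /negPf ->.
by [].
Qed.

Lemma loop m : forall f, Inv G P d f -> (moved f0 f + m * L <= Mb)%N ->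
  Dist f <= (2 * m)%:Z ->
  exists f', [/\ Inv G P d f', (moved f0 f' <= Mb)%N & forall r, (sz f' r : int) = t r].
Proof.
have Dge0 : forall (f : T -> 'I_k * bool) r, 0 <= `|(sz f r : int) - t r| by move=> *; exact: normr_ge0.
have base : forall (f : T -> 'I_k * bool), Dist f = 0 -> forall r, (sz f r : int) = t r.
  move=> f hD r; apply/eqP; rewrite -subr_eq0 -normr_eq0; apply/eqP.
  by apply: (psumr_eq0P _ hD) => // r0 _; apply: Dge0.
have sumz : forall (f : T -> 'I_k * bool), \sum_r ((sz f r : int) - t r) = 0.
  move=> f; rewrite sumrB Htot.
  have -> : \sum_r (sz f r : int) = ((\sum_r sz f r)%N : int) by rewrite (big_morph Posz PoszD erefl).
  by rewrite sz_sum subrr.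
elim: m => [|m IH] f If hM hD.
  exists f; split => //; first by lia.
  by apply: base; apply/eqP; rewrite eq_le hD sumr_ge0.
have [D0|Dn0] := eqVneq (Dist f) 0.
  by exists f; split => //; [lia | apply: base].
have allz : forall (F : 'I_k * bool -> int), (forall r, 0 <= F r) -> \sum_r F r = 0 -> forall r, F r = 0.
  by move=> F F0 hF r; apply: (psumr_eq0P _ hF) => // r0 _; apply: F0.
have [p hp] : exists p, t p < sz f p.
  case: (boolP [exists p, t p < sz f p]) => [/existsP//|/existsPn hn].
  case/negP: Dn0; apply/eqP; apply: big1 => r _.
  have h0 := allz (fun r => t r - (sz f r : int)) _ _ r.
  rewrite distrC h0 ?normr0 //.
  - by move=> r'; rewrite subr_ge0; move: (hn r'); rewrite -leNgt.
  - apply/eqP; rewrite -oppr_eq0 -sumrN.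
    by rewrite (eq_bigr (fun r => (sz f r : int) - t r)) ?sumz // => r' _; rewrite opprB.
have [q hq] : exists q, (sz f q : int) < t q.
  case: (boolP [exists q, (sz f q : int) < t q]) => [/existsP//|/existsPn hn].
  case/negP: Dn0; apply/eqP; apply: big1 => r _.
  have h0 := allz (fun r => (sz f r : int) - t r) _ (sumz f) r.
  rewrite /= in h0; rewrite h0 ?normr0 //.
  by move=> r'; rewrite subr_ge0; move: (hn r'); rewrite -leNgt.
have pq : p != q.
  apply/eqP => epq; rewrite epq in hp; move: hp hq; lia.
have [n nL w] := Hwalk p q.
rewrite mulSn in hM.
have hM1 : (moved f0 f + n <= Mb)%N by lia.
have [f1 [If1 hm1 hs1]] := path_move w If hM1.
have sumi : forall p0 : 'I_k * bool, \sum_r ((r == p0)%:R : int) = 1.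
  move=> p0; rewrite (bigD1 p0) //= eqxx big1 ?addr0 // => r /negPf -> //.
have key : forall r, `|(sz f1 r : int) - t r| = `|(sz f r : int) - t r| - (r == p)%:R - (r == q)%:R.
  move=> r; rewrite hs1.
  case: (eqVneq r p) => [->|rp].
    rewrite (negPf pq) /= addr0 subr0 !ger0_norm; [ring | lia | lia].
  case: (eqVneq r q) => [->|rq] /=.
    rewrite !ler0_norm; [ring | lia | lia].
  by rewrite subr0 addr0 subr0 subr0.
have hD1 : Dist f1 <= (2 * m)%N.
  rewrite /Dist (eq_bigr _ (fun r _ => key r)) !sumrB !sumi.
  change (Dist f - 1 - 1 <= (2 * m)%N); move: hD; lia.
have [f' [If' hm' hs']] := IH f1 If1 ltac:(lia) hD1.
by exists f'.
Qed.
End Loop.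
Lemma succ_val (k : nat) (i : 'I_k) : (succ_idx i : nat) = (i.+1 %% k)%N.
Proof. by case: k i => [|k] i; [case: i | by []]. Qed.

Lemma iter_val (k : nat) (m : nat) (i : 'I_k) :
  (iter m (@succ_idx k) i : nat) = ((i + m) %% k)%N.
Proof.
elim: m => [|m IH] /=; first by rewrite addn0 modn_small.
rewrite succ_val IH -addn1 modnDml; congr (_ %% _)%N; lia.
Qed.

Lemma iter_reach (k : nat) (i j : 'I_k) : exists2 m, (m < k)%N & iter m (@succ_idx k) i = j.
Proof.
have kp : (0 < k)%N by case: k i j => [[]|].
exists ((j + (k - i)) %% k)%N; first by rewrite ltn_mod.
apply: val_inj => /=; rewrite iter_val modnDmr.
have -> : (i + (j + (k - i)) = j + k)%N.
  have := ltn_ord i; lia.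
by rewrite modnDr modn_small.
Qed.

Section Walks.
Variables (k : nat) (Rg : rel ('I_k * bool)).
Hypothesis Rsym : symmetric Rg.
Hypothesis Ham : contains_ham_cycle Rg.

Lemma walk_cat n m p q r : walk Rg n p q -> walk Rg m q r -> walk Rg (n + m) p r.
Proof.
elim => {n p q} [p|n p q r' h w IH] w2 //=.
rewrite addSn; apply: walkS h _; exact: IH.
Qed.

Lemma walkB m (i : 'I_k) : walk Rg m (Bcl i) (Bcl (iter m (@succ_idx k) i)).
Proof.
elim: m i => [|m IH] i; first exact: walk0.
rewrite iterSr; apply: (walkS (q := Bcl (succ_idx i))); last exact: IH.
exact: (Ham i).2.
Qed.

Lemma walkA m (i : 'I_k) : walk Rg m (Acl (iter m (@succ_idx k) i)) (Acl i).
Proof.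
elim: m i => [|m IH] i; first exact: walk0.
rewrite iterS; apply: (walkS (q := Acl (iter m (@succ_idx k) i))); last exact: IH.
rewrite /partner /= Rsym; exact: (Ham _).2.
Qed.

Lemma reachA (x y : 'I_k) : exists2 m, (m < k)%N & walk Rg m (Acl x) (Acl y).
Proof.
have [m mk e] := iter_reach y x; exists m => //; rewrite -e; exact: walkA.
Qed.

Lemma reachB (x y : 'I_k) : exists2 m, (m < k)%N & walk Rg m (Bcl x) (Bcl y).
Proof.
have [m mk e] := iter_reach x y; exists m => //; rewrite -e; exact: walkB.
Qed.

Lemma walk1 p q : Rg p (partner q) -> walk Rg 1 p q.
Proof. by move=> h; apply: walkS h (walk0 _ _). Qed.

Lemma all_walks (i1 j1 i2 j2 : 'I_k) : Rg (Acl i1) (Acl j1) -> Rg (Bcl i2) (Bcl j2) ->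
  forall p q, exists2 n, (n <= 2 * k)%N & walk Rg n p q.
Proof.
move=> hA hB [x [|]] [y [|]].
- have [m mk w] := reachB x y; exists m => //; lia.
- have [m1 m1k w1] := reachB x j2.
  have [m2 m2k w2] := reachA i2 y.
  exists (m1 + (1 + m2))%N; first by lia.
  apply: walk_cat w1 (walk_cat _ w2); apply: walk1.
  by rewrite /partner /= Rsym.
- have [m1 m1k w1] := reachA x j1.
  have [m2 m2k w2] := reachB i1 y.
  exists (m1 + (1 + m2))%N; first by lia.
  apply: walk_cat w1 (walk_cat _ w2); apply: walk1.
  by rewrite /partner /= Rsym.
- have [m mk w] := reachA x y; exists m => //; lia.
Qed.
End Walks.

Lemma sum_pair (V : nmodType) (k : nat) (F : 'I_k * bool -> V) :
  \sum_p F p = \sum_i (F (i, false) + F (i, true)).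
Proof.
symmetry.
rewrite (eq_bigr (fun i => \sum_(bb : bool) F (i, bb))); last first.
  by move=> i _; rewrite big_bool /= addrC.
by rewrite pair_bigA; apply: eq_bigr => -[i bb].
Qed.

Lemma ar_deg (R : realType) (d d' mu Y Y' D m : R) :
  0 < d -> d <= 1 -> 0 < d' -> d' <= d / 8 -> 0 <= mu -> mu <= d / 40 ->
  0 <= Y -> 0 <= m -> m <= mu * Y -> Y' <= Y + m -> d / 2 * Y <= D + m -> d' * Y' <= D.
Proof.
move=> dp d1 d'p d'd mu0 mud Y0 m0 hm hY hD.
have h1 := ler_wpM2l (ltW d'p) hY.
have h2 := ler_wpM2r Y0 d'd.
have h3 : d' * m <= m by have := ler_wpM2r m0 (_ : d' <= 1); rewrite mul1r; apply; lra.
have h4 := ler_wpM2r Y0 mud.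
have h5 : 0 <= d * Y by apply: mulr_ge0 => //; apply: ltW.
rewrite mulrDr in h1.
lra.
Qed.

Lemma ar_mb (R : realType) (K m xi mu n : R) : 0 < K -> 0 <= n -> 0 <= m ->
  m <= 2 * K * xi * n -> 0 <= xi -> xi <= mu / (12 * K ^+ 3) ->
  m * (2 * K) <= mu * (n / (3 * K)).
Proof.
move=> Kp n0 m0 hm xi0 hxi.
have K2 : 0 <= 2 * K by apply: mulr_ge0 => //; apply: ltW.
apply: (le_trans (ler_wpM2r K2 hm)).
have c0 : 0 <= 4 * K ^+ 2 * n by apply: mulr_ge0 => //; apply: mulr_ge0 => //; apply: exprn_ge0; apply: ltW.
have := ler_wpM2r c0 hxi.
have -> : mu / (12 * K ^+ 3) * (4 * K ^+ 2 * n) = mu * (n / (3 * K)).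
  by field; apply: lt0r_neq0.
have -> : 2 * K * xi * n * (2 * K) = xi * (4 * K ^+ 2 * n) by ring.
by [].
Qed.

Lemma ar_xi (R : realType) (K xi mu n : R) : 1 <= K -> 0 <= mu -> mu <= 1 -> 0 <= n ->
  xi <= mu / (12 * K ^+ 3) -> xi * n <= n / (3 * K).
Proof.
move=> K1 mu0 mu1 n0 hxi.
have Kp : 0 < K by lra.
have h : mu / (12 * K ^+ 3) <= 1 / (3 * K).
  rewrite ler_pdivrMr; last by apply: mulr_gt0 => //; apply: exprn_gt0.
  have -> : 1 / (3 * K) * (12 * K ^+ 3) = 4 * K ^+ 2 by field; apply: lt0r_neq0.
  have : 1 <= K ^+ 2 by apply: exprn_ege1.
  lra.
apply: le_trans (ler_wpM2r n0 (le_trans hxi h)) _.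
by rewrite mul1r mulrC.
Qed.

Unset Implicit Arguments.
Theorem lemma6p1 (R : realType) :
  exists d0 : R, 0 < d0 /\ forall d : R, 0 < d -> d <= d0 ->
  exists d'0 : R, 0 < d'0 /\ forall d' : R, 0 < d' -> d' <= d'0 ->
  exists e'0 : R, 0 < e'0 /\ forall eps' : R, 0 < eps' -> eps' <= e'0 ->
  exists e0 : R, 0 < e0 /\ forall eps : R, 0 < eps -> eps <= e0 ->
  exists k0 : nat, forall k : nat, (k0 <= k)%N ->
  exists xi0 : R, 0 < xi0 /\ forall xi : R, 0 < xi -> xi <= xi0 ->
  forall (T : finType) (G : rel T),
    symmetric G -> irreflexive G ->
  forall (P : 'I_k * bool -> {set T}) (Rg : rel ('I_k * bool)),
    symmetric Rg -> irreflexive Rg ->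
    is_partition P ->
    (forall p, #|T|%:R / (3 * k)%:R <= #|P p|%:R :> R) ->
    reduced_graph G Rg eps d P ->
  forall a b : 'I_k -> int,
    contains_ham_cycle Rg ->
    (exists i1 j1 : 'I_k, i1 != j1 /\ Rg (Acl i1) (Acl j1)) ->
    (exists i2 j2 : 'I_k, i2 != j2 /\ Rg (Bcl i2) (Bcl j2)) ->
    (forall i, super_regular_pair G eps d (P (Acl i)) (P (Bcl i))) ->
    (forall i, (`|a i|)%:~R < xi * #|T|%:R /\ (`|b i|)%:~R < xi * #|T|%:R) ->
    \sum_(i < k) a i + \sum_(i < k) b i = 0 ->
    `|\sum_(i < k) a i| = `|\sum_(i < k) b i| /\
      (`|\sum_(i < k) a i|)%:~R <= xi * #|T|%:R ->
  exists P' : 'I_k * bool -> {set T},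
    is_partition P' /\
    (forall i, (#|P' (Acl i)| : int) = (#|P (Acl i)| : int) + a i /\
               (#|P' (Bcl i)| : int) = (#|P (Bcl i)| : int) + b i) /\
    reduced_graph G Rg eps' d' P' /\
    (forall i, super_regular_pair G eps' d' (P' (Acl i)) (P' (Bcl i))).
Proof.
exists 1; split => // d dp d1.
exists (d / 8); split; first by lra.
move=> d' d'p d'd.
exists d'; split => // eps' e'p e'd.
exists (eps' / 2); split; first by lra.
move=> eps ep ee.
exists 1%N => k k1.
pose mu : R := eps' ^+ 2 / 20.
have mup : 0 < mu by rewrite /mu; apply: divr_gt0 => //; apply: exprn_gt0.
have kR : 1 <= k%:R :> R by rewrite ler1n.
have kRp : 0 < k%:R :> R by lra.
exists (mu / (12 * k%:R ^+ 3)).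
split; first by apply: divr_gt0 => //; apply: mulr_gt0 => //; apply: exprn_gt0.
move=> xi xip xile T G Gsym Girr P Rg Rsym Rirr Ppart Psize Pred a b Ham
  [i1 [j1 [_ hA]]] [i2 [j2 [_ hB]]] Psr hab hsum _.
have kp : (0 < k)%N by [].
have e'1 : eps' <= 1 by lra.
have e'sq : eps' ^+ 2 <= eps' by rewrite expr2 ler_piMr //; apply: ltW.
have mu1 : mu <= eps' / 20 by rewrite /mu; lra.
have [Pdisj [Pcov Pne]] := Ppart.
pose p0 : 'I_k * bool := (Ordinal kp, false).
pose f0 := fun x => odflt p0 [pick p | x \in P p].
have Pf0 : forall x p, (x \in P p) = (f0 x == p).
  move=> x p; rewrite /f0; case: pickP => [p' xp'|none] /=.
  - apply/idP/eqP => [xp|<-//].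
    apply/eqP; apply: contraT => ne.
    by rewrite (disjointFr (Pdisj _ _ ne) xp') in xp.
  - by have [i xi'] := Pcov x; have := none i; rewrite xi'.
have PE : forall p, P p = [set x | f0 x == p].
  by move=> p; apply/setP => x; rewrite inE Pf0.
pose n := #|T|.
pose B := n%:R / (3 * k)%:R : R.
have PB : forall p, B <= #|P p|%:R := Psize.
have B0 : 0 <= B by apply: divr_ge0; apply: ler0n.
have Ppos : forall p, (0 < #|P p|)%N by move=> p; rewrite card_gt0; exact: Pne.
pose c := fun p : 'I_k * bool => if p.2 then b p.1 else a p.1.
pose t := fun p => (#|P p| : int) + c p.
have szf0 : forall p, sz f0 p = #|P p| by move=> p; rewrite PE.
have Htot : \sum_r t r = n.
  rewrite /t big_split /=.
  have -> : \sum_r c r = 0 by rewrite sum_pair /= big_split.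
  rewrite addr0 -(big_morph Posz PoszD erefl).
  by congr Posz; rewrite /n -(sz_sum f0); apply: eq_bigr => p _; rewrite szf0.
pose m0 := (\sum_p `|c p|)%N.
have Dist0 : Dist t f0 = m0.
  rewrite /Dist /m0 (big_morph Posz PoszD erefl).
  apply: eq_bigr => p _; rewrite szf0 /t abszE.
  by rewrite opprD addrA subrr sub0r normrN.
have xin : 0 <= xi * n%:R by apply: mulr_ge0; [apply: ltW | apply: ler0n].
have m0R : m0%:R <= 2 * k%:R * xi * n%:R :> R.
  rewrite /m0 natr_sum.
  apply: le_trans (_ : \sum_(p : 'I_k * bool) xi * n%:R <= _).
    apply: ler_sum => p _; rewrite natr_absz intr_norm.
    rewrite /c; case: (p.2); move: (hab p.1) => [h1 h2]; rewrite -intr_norm; apply: ltW.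
    - exact: h2.
    - exact: h1.
  rewrite sumr_const card_prod card_ord card_bool -(mulr_natr (xi * n%:R) (k * 2)) natrM.
  rewrite le_eqVlt; apply/orP; left; apply/eqP; ring.
pose L := (2 * k)%N.
pose Mb := (m0 * L)%N.
have MbR : Mb%:R <= mu * B.
  rewrite /Mb /L /B !natrM.
  apply: (ar_mb kRp (ler0n _ _) (ler0n _ _) m0R (ltW xip)).
  exact: xile.
have mu2 : mu <= 1 / 2 by lra.
have MbP : forall p, Mb%:R <= mu * #|P p|%:R.
  move=> p; apply: le_trans MbR _; apply: ler_wpM2l (PB p); exact: ltW.
have Hav : forall p q, Rg p (partner q) ->
    (#|[set x in P p | ~~ good G P d x q]| + Mb <= #|P p|)%N.
  move=> p q Rpq.
  have hb := bad_few ep (_ : eps <= 1) (_ : eps <= d / 2) (Ppos p) (Pred _ _ Rpq).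
  have -> : [set x in P p | ~~ good G P d x q] =
            [set x in P p | (deg G x (P (partner q)))%:R < d / 2 * #|P (partner q)|%:R].
    by apply/setP => x; rewrite !inE /good -ltNge.
  rewrite -(ler_nat R) natrD; apply: ltW.
  have h1 : mu * #|P p|%:R <= 1 / 2 * #|P p|%:R by apply: ler_wpM2r => //; apply: ler0n.
  have h2 : eps * #|P p|%:R <= 1 / 2 * #|P p|%:R by apply: ler_wpM2r; [apply: ler0n | lra].
  have := hb ltac:(lra) ltac:(lra); have := MbP p; lra.
have Inv0 : Inv G P d f0.
  move=> x; have := Pf0 x (f0 x); rewrite eqxx => xP.
  move: xP; case E: (f0 x) => [i [|]] xP; rewrite /good /partner /=.
  - apply: le_trans _ ((Psr i).2.2 x xP); apply: ler_wpM2r; [apply: ler0n | clear -dp; lra].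
  - apply: le_trans _ ((Psr i).2.1 x xP); apply: ler_wpM2r; [apply: ler0n | clear -dp; lra].
have mv0 : moved f0 f0 = 0%N.
  rewrite /moved (_ : [set x | f0 x != f0 x] = set0) ?cards0 //.
  by apply/setP => x; rewrite !inE eqxx.
have Hwalk := all_walks Rsym Ham hA hB.
have [f [If mvf szf]] := loop Pf0 Hav Hwalk Htot (m := m0) Inv0
  ltac:(rewrite mv0 add0n; exact: leqnn) ltac:(rewrite Dist0 lez_nat mul2n -addnn; exact: leq_addr).
have MvP : forall p, (moved f0 f)%:R <= mu * #|P p|%:R.
  move=> p; apply: le_trans (MbP p); by rewrite ler_nat.
exists (fun p => [set x | f x == p]).
have diff1 : forall p, (#|P p :\: [set x | f x == p]| <= moved f0 f)%N.
  move=> p; apply: subset_leq_card; apply/subsetP => x; rewrite !inE Pf0.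
  by case/andP => /eqP hfx /eqP h0; rewrite h0; apply/eqP => e; apply: hfx; rewrite e.
have diff2 : forall p, (#|[set x | f x == p] :\: P p| <= moved f0 f)%N.
  move=> p; apply: subset_leq_card; apply/subsetP => x; rewrite !inE Pf0.
  by case/andP => h0 /eqP hfx; rewrite hfx; apply: contra h0 => /eqP <-.
have tpos : forall p, 0 < t p.
  move=> p; rewrite -(ltr0z R) /t intrD /=.
  have hc : `|(c p)%:~R| < xi * n%:R :> R.
    rewrite -intr_norm /c; case: (p.2); by case: (hab p.1).
  have := ltrNnormlW hc.
  have := ar_xi kR (ltW mup) (_ : mu <= 1) (ler0n R n) xile.
  have := PB p; rewrite /B natrM.
  clear -mu2; lra.
have red : reduced_graph G Rg eps' d' (fun p => [set x | f x == p]).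
  move=> i j Rij.
  have ee2 : eps <= eps' / 2 by [].
  apply: (perturb e'p e'1 ep ee2 (ltW mup) (lexx _) _ (Ppos i) (Ppos j) (MvP i) (MvP j)
           (diff1 i) (diff2 i) (diff1 j) (diff2 j) (Pred _ _ Rij)).
  rewrite /mu; clear -e'sq d'd e'd d'p; lra.
have mud : mu <= d / 40 by clear -mu1 e'd d'd dp; lra.
have degP : forall x p, (deg G x (P p) <= #|[set y in [set z | f z == p] | G x y]| + moved f0 f)%N.
  move=> x p; apply: leq_trans (leq_add (leqnn _) (diff1 p)).
  apply: leq_trans (cardU_le _ _); apply: subset_leq_card.
  apply/subsetP => y; rewrite !inE; case/andP => yP Gxy; rewrite yP Gxy /=.
  by case: (f y == p).
have sizeP : forall p, (#|[set z | f z == p]| <= #|P p| + moved f0 f)%N.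
  move=> p; apply: leq_trans (leq_add (leqnn _) (diff2 p)).
  apply: leq_trans (cardU_le _ _); apply: subset_leq_card.
  apply/subsetP => y; rewrite !inE; case: (f y == p) => //=; by case: (y \in P p).
have degok : forall x p, good G P d x p ->
    d' * #|[set z | f z == partner p]|%:R <= #|[set y in [set z | f z == partner p] | G x y]|%:R :> R.
  move=> x p g.
  apply: (ar_deg dp d1 d'p d'd (ltW mup) mud (ler0n _ #|P (partner p)|) (ler0n _ (moved f0 f)) (MvP _)).
  - by rewrite -natrD ler_nat.
  - apply: le_trans g _; rewrite -natrD ler_nat; exact: degP.
split; [split; [|split] | split; [|split]].
- move=> i j ij; rewrite -setI_eq0; apply/eqP/setP => x; rewrite !inE.
  apply/negP => /andP[/eqP -> /eqP e]; by rewrite e eqxx in ij.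
- by move=> x; exists (f x); rewrite inE.
- move=> p; rewrite -card_gt0 -ltz_nat; have := szf p; rewrite /sz => ->; exact: tpos.
- move=> i; have h1 := szf (Acl i); have h2 := szf (Bcl i); rewrite /sz in h1 h2.
  by rewrite h1 h2.
- exact: red.
- move=> i; split; first exact: red (Ham i).1.
  split.
  + move=> x; rewrite inE => /eqP fx.
    have := If x; rewrite fx => g; exact: degok x _ g.
  + move=> x; rewrite inE => /eqP fx.
    have := If x; rewrite fx => g; exact: degok x _ g.
Qed.
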